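(* Let $\mathbf A$ be a residuated semigroup satisfying $xx=x$ and $x\backslash x=y/y$ for all $x,y$. Then the element $1:=a\backslash a$ does not depend on $a$, it is the greatest element and a global identity of $\mathbf A$; $\langle A,\le\rangle$ is a meet-semilattice whose meet is $x\wedge y=xy$; and $x\wedge y\le z\iff y\le x\backslash z$ for all $x,y,z$, so $\langle A,\wedge,\backslash,1\rangle$ is a Brouwerian semilattice. In particular, every integrally closed residuated monoid satisfying $xx=x$ is a Brouwerian semilattice in this way.
   Context: A residuated semigroup is a structure $\langle A,\le,\cdot,\backslash,/\rangle$ where $\langle A,\le\rangle$ is a poset, $\langle A,\cdot\rangle$ is a semigroup, and $xy\le z\iff x\le z/y\iff y\le x\backslash z$. A residuated monoid is a residuated semigroup with a global identity $1$ ($1a=a=a1$); it is integrally closed if $x\backslash x=1$ for all $x$. A Brouwerian semilattice is a meet-semilattice $\langle A,\wedge\rangle$ with top element $1$ and a binary operation $\to$ such that $x\wedge y\le z\iff y\le x\to z$. *)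

(* Defs.v *)
Definition is_poset {A : Type} (le : A -> A -> Prop) : Prop :=
  (forall x, le x x) /\
  (forall x y, le x y -> le y x -> x = y) /\
  (forall x y z, le x y -> le y z -> le x z).

(* Residuated semigroup <A, le, mul, ldiv, rdiv>:
   ldiv x z = x \ z,  rdiv z y = z / y. *)
Definition residuated_semigroup {A : Type} (le : A -> A -> Prop)
  (mul ldiv rdiv : A -> A -> A) : Prop :=
  is_poset le /\
  (forall x y z, mul (mul x y) z = mul x (mul y z)) /\
  (forall x y z, (le (mul x y) z <-> le x (rdiv z y)) /\
                 (le (mul x y) z <-> le y (ldiv x z))).

Definition residuated_monoid {A : Type} (le : A -> A -> Prop)
  (mul ldiv rdiv : A -> A -> A) (one : A) : Prop :=
  residuated_semigroup le mul ldiv rdiv /\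
  (forall a, mul one a = a /\ mul a one = a).

Definition integrally_closed {A : Type} (ldiv : A -> A -> A) (one : A) : Prop :=
  forall x, ldiv x x = one.

Definition meet_semilattice_of {A : Type} (le : A -> A -> Prop) (meet : A -> A -> A) : Prop :=
  forall x y, le (meet x y) x /\ le (meet x y) y /\
              (forall z, le z x -> le z y -> le z (meet x y)).

Definition brouwerian_semilattice {A : Type} (le : A -> A -> Prop)
  (meet imp : A -> A -> A) (top : A) : Prop :=
  meet_semilattice_of le meet /\
  (forall x, le x top) /\
  (forall x y z, le (meet x y) z <-> le y (imp x z)).

(* Main.v *)
Require Import Defs.
From Stdlib Require Import Setoid.

Lemma brou_aux (A : Type) (le : A -> A -> Prop) (mul ldiv rdiv : A -> A -> A) (t : A) :
  residuated_semigroup le mul ldiv rdiv ->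
  (forall x, mul x x = x) ->
  (forall x, le x t) ->
  (forall x, mul t x = x /\ mul x t = x) ->
  brouwerian_semilattice le mul ldiv t.
Proof.
  intros [[Hr [Ha Ht]] [Has Hres]] Hid Htop Hun.
  assert (monr : forall x y y', le y y' -> le (mul x y) (mul x y')).
  { intros x y y' H. apply (proj2 (Hres x y (mul x y'))).
    apply Ht with y'; auto. apply (proj2 (Hres x y' (mul x y'))). apply Hr. }
  assert (monl : forall x x' y, le x x' -> le (mul x y) (mul x' y)).
  { intros x x' y H. apply (proj1 (Hres x y (mul x' y))).
    apply Ht with x'; auto. apply (proj1 (Hres x' y (mul x' y))). apply Hr. }
  split; [|split; [exact Htop|]].
  - intros x y. split; [|split].
    + rewrite <- (proj2 (Hun x)) at 2. apply monr, Htop.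
    + rewrite <- (proj1 (Hun y)) at 2. apply monl, Htop.
    + intros z Hx Hy. rewrite <- (Hid z). apply Ht with (mul x z).
      apply monl; auto. apply monr; auto.
  - intros x y z. apply (Hres x y z).
Qed.

Theorem corollary7p3 :
  (forall (A : Type) (le : A -> A -> Prop) (mul ldiv rdiv : A -> A -> A),
    residuated_semigroup le mul ldiv rdiv ->
    (forall x, mul x x = x) ->
    (forall x y, ldiv x x = rdiv y y) ->
    (forall a b, ldiv a a = ldiv b b) /\
    (forall a, (forall x, le x (ldiv a a)) /\
               (forall x, mul (ldiv a a) x = x /\ mul x (ldiv a a) = x) /\
               brouwerian_semilattice le mul ldiv (ldiv a a))) /\
  (forall (A : Type) (le : A -> A -> Prop) (mul ldiv rdiv : A -> A -> A) (one : A),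
    residuated_monoid le mul ldiv rdiv one ->
    integrally_closed ldiv one ->
    (forall x, mul x x = x) ->
    brouwerian_semilattice le mul ldiv one).
Proof.
  split.
  - intros A le mul ldiv rdiv HR Hid Hq.
    pose proof HR as [[Hr [Ha Ht]] [Has Hres]].
    assert (Hind : forall a b, ldiv a a = ldiv b b).
    { intros a b. rewrite (Hq a a), (Hq b a). reflexivity. }
    assert (monr : forall x y y', le y y' -> le (mul x y) (mul x y')).
    { intros x y y' H. apply (proj2 (Hres x y (mul x y'))).
      apply Ht with y'; auto. apply (proj2 (Hres x y' (mul x y'))). apply Hr. }
    assert (monl : forall x x' y, le x x' -> le (mul x y) (mul x' y)).
    { intros x x' y H. apply (proj1 (Hres x y (mul x' y))).
      apply Ht with x'; auto. apply (proj1 (Hres x' y (mul x' y))). apply Hr. }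
    split; [exact Hind|]. intros a.
    assert (Htop : forall x, le x (ldiv a a)).
    { intros x. rewrite (Hind a x). apply (proj2 (Hres x x x)). rewrite Hid. apply Hr. }
    assert (Hun : forall x, mul (ldiv a a) x = x /\ mul x (ldiv a a) = x).
    { intros x. split; apply Ha.
      - rewrite (Hq a x). apply (proj1 (Hres (rdiv x x) x x)). apply Hr.
      - rewrite <- (Hid x) at 1. apply monl, Htop.
      - rewrite (Hind a x). apply (proj2 (Hres x (ldiv x x) x)). apply Hr.
      - rewrite <- (Hid x) at 1. apply monr, Htop. }
    split; [exact Htop|]. split; [exact Hun|].
    apply (brou_aux A le mul ldiv rdiv); auto.
  - intros A le mul ldiv rdiv one [HR Hun] Hic Hid.
    pose proof HR as [[Hr [Ha Ht]] [Has Hres]].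
    apply (brou_aux A le mul ldiv rdiv); auto.
    intros x. rewrite <- (Hic x). apply (proj2 (Hres x x x)). rewrite Hid. apply Hr.
Qed.
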